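(* Let $P$ be a continuous poset. Then (i) $\overline{k[U]}\cong k[\mathrm{Int}\,U]$ for every up-set $U\subseteq P$, where $\mathrm{Int}$ is the interior in the Scott topology; (ii) $\overline{k[D]}\cong k[\mathrm{cl}\,D]$ for every down-set $D\subseteq P$, where $\mathrm{cl}$ is the closure in the Scott topology. For $P=\mathbb R^n$ with the componentwise order one also has (iii) $\underline{k[U]}\cong k[\mathrm{cl}^s U]$ for every up-set $U\subseteq\mathbb R^n$ and (iv) $\underline{k[D]}\cong k[\mathrm{Int}^s D]$ for every down-set $D\subseteq\mathbb R^n$, where $\mathrm{cl}^s$, $\mathrm{Int}^s$ denote closure and interior in the standard Euclidean topology.
   Context: Let $P$ be a poset (as a category, $p\to q$ iff $p\le q$). A subset is directed if nonempty and any two elements have an upper bound in it. $x\ll y$ means: for every directed $D$ whose supremum exists with $y\le\sup D$, some $d\in D$ satisfies $x\le d$. $P$ is continuous if for each $p$ the set $\{x:x\ll p\}$ is directed with supremum $p$ ($\mathbb R^n$ with componentwise order is continuous, with $x\ll y$ iff $x_i<y_i$ for all $i$). A set $U$ is Scott-open if it is an up-set meeting every directed set whose supremum exists and lies in $U$. $k$ is a commutative ring with unity; persistence modules are functors from $P$ to $k$-modules. For a convex $I\subseteq P$ (i.e. $x,z\in I$, $x\le y\le z$ imply $y\in I$), the indicator module $k[I]$ has $k[I]_p=k$ for $p\in I$ and $0$ otherwise, with identity internal maps between points of $I$ and zero otherwise. $\underline M_p=\varprojlim_{x\gg p}M_x$, $\overline M_p=\varinjlim_{x\ll p}M_x$.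 *)

(* Defs.v *)
From HB Require Import structures.
From mathcomp Require Import all_boot all_order all_algebra.
From mathcomp Require Import all_classical all_reals all_analysis.
Set Implicit Arguments. Unset Strict Implicit. Unset Printing Implicit Defensive.
Import Order.TTheory GRing.Theory Num.Theory.
Import numFieldNormedType.Exports.
Local Open Scope classical_set_scope.
Local Open Scope ring_scope.

Section PosetNotions.
Variables (P : Type) (le : P -> P -> Prop).

Definition is_poset : Prop :=
  (forall x, le x x) /\ (forall x y z, le x y -> le y z -> le x z) /\
  (forall x y, le x y -> le y x -> x = y).

Definition directed (D : set P) : Prop :=
  (exists d, D d) /\
  (forall x y, D x -> D y -> exists z, D z /\ le x z /\ le y z).

Definition is_sup (D : set P) (s : P) : Prop :=
  (forall d, D d -> le d s) /\ (forall u, (forall d, D d -> le d u) -> le s u).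

Definition way_below (x y : P) : Prop :=
  forall (D : set P) (s : P), directed D -> is_sup D s -> le y s ->
    exists d, D d /\ le x d.

Definition continuous_poset : Prop :=
  forall p, directed (fun x => way_below x p) /\ is_sup (fun x => way_below x p) p.

Definition up_set (U : set P) : Prop := forall x y, U x -> le x y -> U y.
Definition down_set (D : set P) : Prop := forall x y, D y -> le x y -> D x.

Definition scott_open (U : set P) : Prop :=
  up_set U /\
  forall (D : set P) (s : P), directed D -> is_sup D s -> U s -> exists d, D d /\ U d.

Definition scott_int (A : set P) : set P :=
  fun p => exists V, scott_open V /\ (forall x, V x -> A x) /\ V p.

Definition scott_cl (A : set P) : set P := ~` scott_int (~` A).

Section Modules.
Variable k : comPzRingType.

(* A persistence module: a k-module at each point and structure maps
   M(p -> q), only meaningful (and only used) when le p q. *)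
Record pmod := PMod {
  pobj : P -> lmodType k;
  pmap : forall p q : P, {linear pobj p -> pobj q} }.

Definition is_pmod (M : pmod) : Prop :=
  (forall p v, pmap M p p v = v) /\
  (forall p q r v, le p q -> le q r ->
     pmap M p r v = pmap M q r (pmap M p q v)).

(* Indicator module k[I]: k (as 'rV[k]_1) on I, 0 (as 'rV[k]_0) off I;
   the structure map is right multiplication by the all-ones matrix, which is
   the identity 'rV_1 -> 'rV_1 and zero whenever source or target is 0. *)
Definition ind_dim (I : set P) (p : P) : nat := if `[< I p >] then 1%N else 0%N.

Definition ind_obj (I : set P) (p : P) : lmodType k := 'rV[k]_(ind_dim I p).

Definition ind_map (I : set P) (p q : P) : {linear ind_obj I p -> ind_obj I q} :=
  mulmxr (const_mx 1 : 'M[k]_(ind_dim I p, ind_dim I q)).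

Definition indicator (I : set P) : pmod := PMod (@ind_map I).

Definition pmod_iso (M N : pmod) : Prop :=
  exists phi : forall p, {linear pobj M p -> pobj N p},
    (forall p, bijective (phi p)) /\
    (forall p q v, le p q -> phi q (pmap M p q v) = pmap N p q (phi p v)).

Definition is_colimit (M : pmod) (S : set P) (Z : lmodType k)
    (iota : forall x, {linear pobj M x -> Z}) : Prop :=
  (forall x y v, S x -> S y -> le x y -> iota y (pmap M x y v) = iota x v) /\
  (forall (W : lmodType k) (f : forall x, {linear pobj M x -> W}),
     (forall x y v, S x -> S y -> le x y -> f y (pmap M x y v) = f x v) ->
     exists g : {linear Z -> W},
       (forall x v, S x -> g (iota x v) = f x v) /\
       (forall g' : {linear Z -> W}, (forall x v, S x -> g' (iota x v) = f x v) ->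
          forall z, g' z = g z)).

Definition is_limit (M : pmod) (S : set P) (Z : lmodType k)
    (pi : forall x, {linear Z -> pobj M x}) : Prop :=
  (forall x y z, S x -> S y -> le x y -> pmap M x y (pi x z) = pi y z) /\
  (forall (W : lmodType k) (f : forall x, {linear W -> pobj M x}),
     (forall x y w, S x -> S y -> le x y -> pmap M x y (f x w) = f y w) ->
     exists g : {linear W -> Z},
       (forall x w, S x -> pi x (g w) = f x w) /\
       (forall g' : {linear W -> Z}, (forall x w, S x -> pi x (g' w) = f x w) ->
          forall w, g' w = g w)).

(* N = \overline M : N_p = colim_{x << p} M_x, with the induced structure maps *)
Definition is_upper_bar (M N : pmod)
    (iota : forall p x, {linear pobj M x -> pobj N p}) : Prop :=
  (forall p, @is_colimit M (fun x => way_below x p) _ (iota p)) /\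
  (forall p q x v, le p q -> way_below x p ->
     pmap N p q (iota p x v) = iota q x v).

(* N = \underline M : N_p = lim_{x >> p} M_x, with the induced structure maps *)
Definition is_lower_bar (M N : pmod)
    (pi : forall p x, {linear pobj N p -> pobj M x}) : Prop :=
  (forall p, @is_limit M (fun x => way_below p x) _ (pi p)) /\
  (forall p q x v, le p q -> way_below q x ->
     pi q x (pmap N p q v) = pi p x v).

(* "\overline M is isomorphic to N": the colimit module exists, and any
   realisation of it is isomorphic to N. *)
Definition upper_bar_iso (M N : pmod) : Prop :=
  (exists B iota, @is_upper_bar M B iota) /\
  (forall B iota, @is_upper_bar M B iota -> pmod_iso B N).

Definition lower_bar_iso (M N : pmod) : Prop :=
  (exists B pi, @is_lower_bar M B pi) /\
  (forall B pi, @is_lower_bar M B pi -> pmod_iso B N).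

End Modules.
End PosetNotions.

Definition rn_le (R : realType) (n : nat) (x y : 'rV[R]_n) : Prop :=
  forall i, x ord0 i <= y ord0 i.

(* Main.v *)
Require Import Defs.
From HB Require Import structures.
From mathcomp Require Import all_boot all_order all_algebra.
From mathcomp Require Import all_classical all_reals all_analysis.
From mathcomp Require Import lra.
Import Order.TTheory GRing.Theory Num.Theory.
Import numFieldNormedType.Exports.
Local Open Scope classical_set_scope.
Local Open Scope ring_scope.
Set Implicit Arguments. Unset Strict Implicit. Unset Printing Implicit Defensive.
Section Gen.
Variables (P : Type) (le : P -> P -> Prop).
Hypothesis Hpo : is_poset le.

Lemma le_refl' x : le x x. Proof. by case: Hpo. Qed.
Lemma le_trans' x y z : le x y -> le y z -> le x z.
Proof. by case: Hpo => _ [H _]; apply: H. Qed.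

Lemma wb_le {x y} : way_below le x y -> le x y.
Proof.
move=> H.
have HD : directed le (fun z => z = y).
  split; first by exists y.
  by move=> a b -> ->; exists y; split=> //; split; apply: le_refl'.
have HS : is_sup le (fun z => z = y) y.
  by split; [move=> d -> ; apply: le_refl'|move=> u; apply].
by have [d [-> //]] := H (fun z => z = y) y HD HS (le_refl' y).
Qed.

Lemma wb_trans_r {x y z} : way_below le x y -> le y z -> way_below le x z.
Proof. move=> H lyz D s HD Hs lzs; apply: H HD Hs _; exact: le_trans' lyz lzs. Qed.

Lemma wb_trans_l {x y z} : le x y -> way_below le y z -> way_below le x z.
Proof.
move=> lxy H D s HD Hs lzs; have [d [Dd lyd]] := H D s HD Hs lzs.
by exists d; split=> //; apply: le_trans' lxy lyd.
Qed.

Variable k : comPzRingType.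

Lemma colim_uniq {M : pmod P k} {S : set P} {Z : lmodType k} {iota : forall x, {linear pobj M x -> Z}} :
  is_colimit le (M:=M) S (Z:=Z) iota ->
  forall (W : lmodType k) (h1 h2 : {linear Z -> W}),
  (forall x v, S x -> h1 (iota x v) = h2 (iota x v)) -> forall z, h1 z = h2 z.
Proof.
move=> [c u] W h1 h2 E.
have C : forall x y v, S x -> S y -> le x y ->
    (h2 \o iota y) (Defs.pmap M x y v) = (h2 \o iota x) v.
  by move=> x y v Sx Sy lxy /=; rewrite c.
have [g [_ U]] := u W (fun x => h2 \o iota x) C.
by move=> z; rewrite (U h1) ?(U h2).
Qed.

Lemma lim_uniq {M : pmod P k} {S : set P} {Z : lmodType k} {pr : forall x, {linear Z -> pobj M x}} :
  is_limit le (M:=M) S (Z:=Z) pr ->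
  forall (W : lmodType k) (h1 h2 : {linear W -> Z}),
  (forall x w, S x -> pr x (h1 w) = pr x (h2 w)) -> forall w, h1 w = h2 w.
Proof.
move=> [c u] W h1 h2 E.
have C : forall x y w, S x -> S y -> le x y ->
    Defs.pmap M x y ((pr x \o h2) w) = (pr y \o h2) w.
  by move=> x y w Sx Sy lxy /=; rewrite c.
have [g [_ U]] := u W (fun x => pr x \o h2) C.
by move=> z; rewrite (U h1) ?(U h2).
Qed.

Lemma colim_iso (M B B' : pmod P k) iota iota' :
  is_upper_bar le (M:=M) (N:=B) iota -> is_upper_bar le (M:=M) (N:=B') iota' ->
  pmod_iso le B B'.
Proof.
move=> [HB1 HB2] [HB1' HB2'].
have phi_ex : forall p, exists g : {linear pobj B p -> pobj B' p},
    forall x v, way_below le x p -> g (iota p x v) = iota' p x v.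
  move=> p; have [g [Hg _]] := (HB1 p).2 _ (iota' p) (HB1' p).1.
  by exists g.
have psi_ex : forall p, exists g : {linear pobj B' p -> pobj B p},
    forall x v, way_below le x p -> g (iota' p x v) = iota p x v.
  move=> p; have [g [Hg _]] := (HB1' p).2 _ (iota p) (HB1 p).1.
  by exists g.
pose phi p := proj1_sig (cid (phi_ex p)).
have phiP p : forall x v, way_below le x p -> phi p (iota p x v) = iota' p x v.
  exact: (proj2_sig (cid (phi_ex p))).
pose psi p := proj1_sig (cid (psi_ex p)).
have psiP p : forall x v, way_below le x p -> psi p (iota' p x v) = iota p x v.
  exact: (proj2_sig (cid (psi_ex p))).
exists phi; split.
  move=> p; exists (psi p).
    move=> z; apply: (colim_uniq (HB1 p) (h1 := psi p \o phi p) (h2 := idfun)).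
    by move=> x v Hx /=; rewrite phiP // psiP.
  move=> z; apply: (colim_uniq (HB1' p) (h1 := phi p \o psi p) (h2 := idfun)).
  by move=> x v Hx /=; rewrite psiP // phiP.
move=> p q v lpq.
apply: (colim_uniq (HB1 p) (h1 := phi q \o Defs.pmap B p q) (h2 := Defs.pmap B' p q \o phi p)).
move=> x w Hx /=.
have Hxq := wb_trans_r Hx lpq.
by rewrite HB2 // phiP // phiP // HB2'.
Qed.

Lemma lim_iso (M B B' : pmod P k) pr pr' :
  is_lower_bar le (M:=M) (N:=B) pr -> is_lower_bar le (M:=M) (N:=B') pr' ->
  pmod_iso le B B'.
Proof.
move=> [HB1 HB2] [HB1' HB2'].
have phi_ex : forall p, exists g : {linear pobj B p -> pobj B' p},
    forall x b, way_below le p x -> pr' p x (g b) = pr p x b.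
  move=> p; have [g [Hg _]] := (HB1' p).2 _ (pr p) (HB1 p).1.
  by exists g.
have psi_ex : forall p, exists g : {linear pobj B' p -> pobj B p},
    forall x b, way_below le p x -> pr p x (g b) = pr' p x b.
  move=> p; have [g [Hg _]] := (HB1 p).2 _ (pr' p) (HB1' p).1.
  by exists g.
pose phi p := proj1_sig (cid (phi_ex p)).
have phiP p : forall x b, way_below le p x -> pr' p x (phi p b) = pr p x b.
  exact: (proj2_sig (cid (phi_ex p))).
pose psi p := proj1_sig (cid (psi_ex p)).
have psiP p : forall x b, way_below le p x -> pr p x (psi p b) = pr' p x b.
  exact: (proj2_sig (cid (psi_ex p))).
exists phi; split.
  move=> p; exists (psi p).
    move=> z; apply: (lim_uniq (HB1 p) (h1 := psi p \o phi p) (h2 := idfun)).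
    by move=> x v Hx /=; rewrite psiP // phiP.
  move=> z; apply: (lim_uniq (HB1' p) (h1 := phi p \o psi p) (h2 := idfun)).
  by move=> x v Hx /=; rewrite phiP // psiP.
move=> p q v lpq.
apply: (lim_uniq (HB1' q) (h1 := phi q \o Defs.pmap B p q) (h2 := Defs.pmap B' p q \o phi p)).
move=> x w Hx /=.
rewrite phiP // HB2 // HB2' // phiP //; apply: wb_trans_l lpq Hx.
Qed.

End Gen.
Section Ind.
Variable k : comPzRingType.

Definition J a b := (const_mx 1 : 'M[k]_(a, b)).

Lemma Jcomp a b c (v : 'rV[k]_a) : (b = 1 \/ a = 0 \/ c = 0)%N ->
  v *m J a b *m J b c = v *m J a c.
Proof.
case=> [Hb|[Ha|Hc]]; [subst b|subst a|subst c].
- rewrite -mulmxA; congr (_ *m _); apply/matrixP => i j.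
  by rewrite !mxE big_ord1 !mxE mulr1.
- by rewrite (thinmx0 v) !mul0mx.
- by apply/matrixP => i [].
Qed.

Lemma Jid a (v : 'rV[k]_a) : (a <= 1)%N -> v *m J a a = v.
Proof.
case: a v => [|[|a]] v // _.
  by apply/matrixP => i [].
apply/matrixP => i j; rewrite !mxE big_ord1 !mxE mulr1.
by rewrite (ord1 j) (ord1 i).
Qed.

Lemma rv0 a (v : 'rV[k]_a) : a = 0%N -> v = 0.
Proof. by move=> Ha; subst a; apply/matrixP => i []. Qed.

Lemma dimP {P : Type} (I : set P) p :
  (I p /\ ind_dim I p = 1%N) \/ (~ I p /\ ind_dim I p = 0%N).
Proof. by rewrite /ind_dim; case: (asboolP (I p)) => H; [left|right]. Qed.

Lemma dim_le1 {P : Type} (I : set P) p : (ind_dim I p <= 1)%N.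
Proof. by rewrite /ind_dim; case: ifP. Qed.

End Ind.
Arguments rv0 {k a}.
Section Cons.
Variables (P : Type) (le : P -> P -> Prop) (k : comPzRingType).
Hypothesis Hpo : is_poset le.

Definition iotaU (S T : set P) p x :
  {linear pobj (indicator k S) x -> pobj (indicator k T) p} :=
  mulmxr (J k (ind_dim S x) (ind_dim T p)).

Lemma upper_ind (S T : set P) :
  (forall p, exists x, way_below le x p) ->
  (forall p x y, way_below le x p -> way_below le y p ->
     exists z, way_below le z p /\ le x z /\ le y z) ->
  (forall p x y, way_below le x p -> way_below le y p -> le x y -> S x -> T p -> S y) ->
  (forall p q x, le p q -> way_below le x p -> S x -> T q -> T p) ->
  (forall p, T p -> exists x0, way_below le x0 p /\ S x0) ->
  (forall p, ~ T p -> forall x, way_below le x p ->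
     exists z, way_below le z p /\ le x z /\ ~ S z) ->
  is_upper_bar le (M:=indicator k S) (N:=indicator k T) (iotaU S T).
Proof.
move=> ne dir h1 h2 h3 h4; split.
  move=> p; split.
    move=> x y v Hx Hy lxy /=.
    apply: Jcomp.
    have [[Sx _]|[_ ->]] := dimP S x; last by right; left.
    have [[Tp _]|[_ ->]] := dimP T p; last by right; right.
    by left; have [[_ ->]|[]] := dimP S y; last by case; apply: h1 Hx Hy lxy Sx Tp.
  move=> W f Hf.
  have [x1 [Hx1 Sx1]] : exists x1, way_below le x1 p /\ (T p -> S x1).
    case: (pselect (T p)) => Tp.
      by have [x0 [? ?]] := h3 p Tp; exists x0.
    by have [x0 ?] := ne p; exists x0.
  exists (f x1 \o mulmxr (J k (ind_dim T p) (ind_dim S x1))); split.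
    move=> x v Hx /=.
    case: (pselect (T p)) => Tp.
      have [z [Hz [lxz lx1z]]] := dir p x x1 Hx Hx1.
      rewrite -(Hf x z v Hx Hz lxz) -(Hf x1 z _ Hx1 Hz lx1z) /=.
      congr (f z _).
      have [[_ dp]|[]//] := dimP T p.
      have [[_ dx1]|[]] := dimP S x1; last by move=> []; apply: Sx1.
      by rewrite Jcomp; [rewrite Jcomp //; left|left].
    rewrite (rv0 (v *m _)); last by have [[]|[]] := dimP T p.
    rewrite mul0mx linear0.
    have [z [Hz [lxz nSz]]] := h4 p Tp x Hx.
    rewrite -(Hf x z v Hx Hz lxz) /= (rv0 (v *m _)) ?linear0 //.
    by have [[]|[]] := dimP S z.
  move=> g' Hg' z /=.
  case: (pselect (T p)) => Tp.
    have [[_ dp]|[]//] := dimP T p.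
    have [[_ dx1]|[]] := dimP S x1; last by move=> []; apply: Sx1.
    transitivity (g' (z *m J k (ind_dim T p) (ind_dim S x1) *m J k (ind_dim S x1) (ind_dim T p))).
      by rewrite Jcomp ?Jid ?dp //; left.
    by have := Hg' x1 (z *m J k (ind_dim T p) (ind_dim S x1)) Hx1; rewrite /= => ->.
  by rewrite (rv0 z) ?mul0mx ?linear0 //; have [[]|[]] := dimP T p.
move=> p q x v lpq Hx /=.
apply: Jcomp.
have [[Sx _]|[_ ->]] := dimP S x; last by right; left.
have [[Tq _]|[_ ->]] := dimP T q; last by right; right.
by left; have [[_ ->]|[]] := dimP T p; last by case; apply: h2 lpq Hx Sx Tq.
Qed.

Definition piL (S T : set P) p x :
  {linear pobj (indicator k T) p -> pobj (indicator k S) x} :=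
  mulmxr (J k (ind_dim T p) (ind_dim S x)).

Lemma lower_ind (S T : set P) :
  (forall p, exists x, way_below le p x) ->
  (forall p x y, way_below le p x -> way_below le p y ->
     exists z, way_below le p z /\ le z x /\ le z y) ->
  (forall p x y, way_below le p x -> way_below le p y -> le x y -> T p -> S y -> S x) ->
  (forall p q x, le p q -> way_below le q x -> T p -> S x -> T q) ->
  (forall p, T p -> exists x0, way_below le p x0 /\ S x0) ->
  (forall p, ~ T p -> forall x, way_below le p x ->
     exists z, way_below le p z /\ le z x /\ ~ S z) ->
  is_lower_bar le (M:=indicator k S) (N:=indicator k T) (piL S T).
Proof.
move=> ne filt l1 l2 l3 l4; split.
  move=> p; split.
    move=> x y z Hx Hy lxy /=.
    apply: Jcomp.
    have [[Tp _]|[_ ->]] := dimP T p; last by right; left.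
    have [[Sy _]|[_ ->]] := dimP S y; last by right; right.
    by left; have [[_ ->]|[]] := dimP S x; last by case; apply: l1 Hx Hy lxy Tp Sy.
  move=> W f Hf.
  have [x1 [Hx1 Sx1]] : exists x1, way_below le p x1 /\ (T p -> S x1).
    case: (pselect (T p)) => Tp.
      by have [x0 [? ?]] := l3 p Tp; exists x0.
    by have [x0 ?] := ne p; exists x0.
  exists (mulmxr (J k (ind_dim S x1) (ind_dim T p)) \o f x1); split.
    move=> x w Hx /=.
    case: (pselect (T p)) => Tp.
      have [z [Hz [lzx lzx1]]] := filt p x x1 Hx Hx1.
      rewrite -(Hf z x w Hz Hx lzx) -(Hf z x1 w Hz Hx1 lzx1) /=.
      have [[_ dp]|[]//] := dimP T p.
      have [[_ dx1]|[]] := dimP S x1; last by move=> []; apply: Sx1.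
      by rewrite Jcomp; [rewrite Jcomp //; left|left].
    rewrite (rv0 (f x1 w *m _)); last by have [[]|[]] := dimP T p.
    rewrite mul0mx.
    have [z [Hz [lzx nSz]]] := l4 p Tp x Hx.
    rewrite -(Hf z x w Hz Hx lzx) /= (rv0 (f z w)) ?mul0mx //.
    by have [[]|[]] := dimP S z.
  move=> g' Hg' w /=.
  case: (pselect (T p)) => Tp.
    have [[_ dp]|[]//] := dimP T p.
    have [[_ dx1]|[]] := dimP S x1; last by move=> []; apply: Sx1.
    transitivity (g' w *m J k (ind_dim T p) (ind_dim S x1) *m J k (ind_dim S x1) (ind_dim T p)).
      by rewrite Jcomp ?Jid ?dp //; left.
    by have := Hg' x1 w Hx1; rewrite /= => ->.
  have d0 : ind_dim T p = 0%N by have [[]|[]] := dimP T p.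
  by rewrite [LHS](rv0 _ d0) [RHS](rv0 _ d0).
move=> p q x v lpq Hx /=.
apply: Jcomp.
have [[Tp _]|[_ ->]] := dimP T p; last by right; left.
have [[Sx _]|[_ ->]] := dimP S x; last by right; right.
by left; have [[_ ->]|[]] := dimP T q; last by case; apply: l2 lpq Hx Tp Sx.
Qed.
End Cons.
Section Scott.
Variables (P : Type) (le : P -> P -> Prop).
Hypotheses (Hpo : is_poset le) (Hc : continuous_poset le).

Lemma wb_ne p : exists x, way_below le x p.
Proof. by have [[[x Hx] _] _] := Hc p; exists x. Qed.

Lemma wb_dir p x y : way_below le x p -> way_below le y p ->
  exists z, way_below le z p /\ le x z /\ le y z.
Proof. by have [[_ H] _] := Hc p; apply: H. Qed.

Lemma interp x p : way_below le x p -> exists y, way_below le x y /\ way_below le y p.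
Proof.
move=> Hxp.
pose E := fun y => exists z, way_below le y z /\ way_below le z p.
have HE : directed le E.
  split.
    have [z Hz] := wb_ne p; have [y Hy] := wb_ne z.
    by exists y, z.
  move=> y1 y2 [z1 [H1 H1']] [z2 [H2 H2']].
  have [z [Hz [l1 l2]]] := wb_dir H1' H2'.
  have [y [Hy [m1 m2]]] := wb_dir (@wb_trans_r P le Hpo _ _ _ H1 l1) (@wb_trans_r P le Hpo _ _ _ H2 l2).
  by exists y; split; [exists z|split].
have HS : is_sup le E p.
  split.
    move=> y [z [Hyz Hzp]]; exact: le_trans' Hpo _ _ _ (@wb_le P le Hpo _ _ Hyz) (@wb_le P le Hpo _ _ Hzp).
  move=> u Hu; apply: (Hc p).2.2 => z Hz; apply: (Hc z).2.2 => y Hy.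
  by apply: Hu; exists z.
have [d [[z [Hdz Hzp]] lxd]] := Hxp E p HE HS (le_refl' Hpo p).
exists z; split => //. exact: (@wb_trans_l P le Hpo x d z lxd Hdz).
Qed.

Lemma wbU (U : set P) x p : up_set le U -> way_below le x p -> U x ->
  scott_int le U p.
Proof.
move=> up Hxp Ux; exists (way_below le x); split; last split.
- split; first by move=> a b Ha lab; exact: @wb_trans_r P le Hpo _ _ _ Ha lab.
  move=> D s HD Hs Hxs.
  have [y [Hxy Hys]] := interp Hxs.
  have [d [Dd lyd]] := Hys D s HD Hs (le_refl' Hpo s).
  by exists d; split => //; exact: @wb_trans_r P le Hpo _ _ _ Hxy lyd.
- by move=> y Hy; apply: up Ux (@wb_le P le Hpo _ _ Hy).
- exact: Hxp.
Qed.

Lemma open_wb (V : set P) p : scott_open le V -> V p ->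
  exists x, way_below le x p /\ V x.
Proof. by move=> [_ H] Vp; apply: (H _ p (Hc p).1 (Hc p).2 Vp). Qed.

Variable k : comPzRingType.

Lemma part_i (U : set P) : up_set le U ->
  upper_bar_iso le (indicator k U) (indicator k (scott_int le U)).
Proof.
move=> up.
have H : is_upper_bar le (M:=indicator k U) (N:=indicator k (scott_int le U))
    (iotaU k U (scott_int le U)).
  apply: upper_ind.
  - exact: wb_ne.
  - exact: wb_dir.
  - by move=> p x y _ _ lxy Sx _; apply: up Sx lxy.
  - by move=> p q x _ Hx Sx _; apply: wbU Hx Sx.
  - move=> p [V [Vo [VU Vp]]].
    by have [x [Hx Vx]] := open_wb Vo Vp; exists x; split => //; apply: VU.
  - move=> p nTp x Hx; exists x; split => //; split; first exact: le_refl' Hpo x.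
    by move=> Ux; apply: nTp; apply: wbU Hx Ux.
split; first by exists (indicator k (scott_int le U)), (iotaU k U (scott_int le U)).
by move=> B iota HB; exact: (@colim_iso P le Hpo k _ _ _ _ _ HB H).
Qed.

Lemma part_ii (D : set P) : down_set le D ->
  upper_bar_iso le (indicator k D) (indicator k (scott_cl le D)).
Proof.
move=> down.
have upC : up_set le (~` D) by move=> x y nDx lxy Dy; apply: nDx (down _ _ Dy lxy).
have inD : forall p y, scott_cl le D p -> way_below le y p -> D y.
  move=> p y Tp Hy; apply: contrapT => nDy; apply: Tp; exact: wbU upC Hy nDy.
have H : is_upper_bar le (M:=indicator k D) (N:=indicator k (scott_cl le D))
    (iotaU k D (scott_cl le D)).
  apply: upper_ind.
  - exact: wb_ne.
  - exact: wb_dir.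
  - by move=> p x y Hx Hy lxy Sx Tp; apply: inD Tp Hy.
  - move=> p q x lpq Hx Sx Tq [V [Vo [VD Vp]]]; apply: Tq.
    by exists V; split => //; split => //; apply: Vo.1 Vp lpq.
  - by move=> p Tp; have [x0 Hx0] := wb_ne p; exists x0; split => //; apply: inD Tp Hx0.
  - move=> p nTp x Hx.
    have [V [Vo [VD Vp]]] : scott_int le (~` D) p by apply: contrapT.
    have [x1 [Hx1 Vx1]] := open_wb Vo Vp.
    have [z [Hz [lxz lx1z]]] := wb_dir Hx Hx1.
    exists z; split => //; split => // Dz.
    by apply: (VD x1 Vx1); apply: down Dz lx1z.
split; first by exists (indicator k (scott_cl le D)), (iotaU k D (scott_cl le D)).
by move=> B iota HB; exact: (@colim_iso P le Hpo k _ _ _ _ _ HB H).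
Qed.

End Scott.
Section Rn.
Variables (R : realType) (n : nat).
Local Notation rle := (@rn_le R n).

Lemma rn_po : is_poset rle.
Proof.
split; first by move=> x i; exact: lexx.
split; first by move=> x y z h1 h2 i; exact: le_trans (h1 i) (h2 i).
move=> x y h1 h2; apply/matrixP => i j; rewrite (ord1 i).
by apply/eqP; rewrite eq_le h1 h2.
Qed.

Lemma rn_nbhs (p : 'rV[R]_n) (B : set 'rV[R]_n) :
  nbhs p B -> exists x : 'rV[R]_n, (forall i, p ord0 i < x ord0 i) /\ B x.
Proof.
move/nbhs_ballP => [e e0 sub].
exists (p + const_mx (e/2)); split.
  by move=> i; rewrite !mxE ltrDl divr_gt0.
apply: sub; split => // i j; rewrite !mxE /ball /=.
rewrite opprD addrA subrr add0r normrN gtr0_norm; rewrite /= in e0; lra.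
Qed.

Lemma rn_box (p x : 'rV[R]_n) :
  (forall i, p ord0 i < x ord0 i) -> nbhs p [set y | forall i, y ord0 i < x ord0 i].
Proof.
move=> H.
have := @filter_forall _ _ (fun i => [set y : 'rV[R]_n | y ord0 i < x ord0 i]) (nbhs p) _.
apply => i; apply/nbhs_ballP; exists (x ord0 i - p ord0 i); first by rewrite /= subr_gt0.
move=> y [_ /(_ ord0 i)]; rewrite /ball /= => h.
move: h; rewrite ltr_norml => /andP[h1 h2]; lra.
Qed.

Lemma rn_wb (p x : 'rV[R]_n) :
  way_below rle p x <-> (forall i, p ord0 i < x ord0 i).
Proof.
split.
  move=> H i.
  pose D := fun y : 'rV[R]_n => exists e : R, 0 < e /\ y = x - const_mx e.
  have HD : directed rle D.
    split; first by exists (x - const_mx 1), 1; split => //; exact: ltr01.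
    move=> y1 y2 [e1 [e1p ->]] [e2 [e2p ->]].
    exists (x - const_mx (Num.min e1 e2)); split.
      by exists (Num.min e1 e2); split => //; rewrite lt_min e1p e2p.
    have m1 := ge_min e1 e1 e2; have m2 := ge_min e2 e1 e2.
    rewrite lexx orbT in m2; rewrite lexx in m1.
    by split => j; rewrite !mxE; lra.
  have HS : is_sup rle D x.
    split; first by move=> d [e [e0 ->]] j; rewrite !mxE; lra.
    move=> u Hu j; apply/ler_addgt0Pr => e e0.
    have := Hu (x - const_mx e) (ex_intro _ e (conj e0 erefl)) j; rewrite !mxE; lra.
  have [d [[e [e0 ->]] Hpd]] := H D x HD HS (fun j => lexx _).
  by have := Hpd i; rewrite !mxE; lra.
move=> Hlt D s [Dne Ddir] [Sup Sl] lxs.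
have step1 : forall i, exists d, D d /\ p ord0 i <= d ord0 i.
  move=> i; apply: contrapT => nE.
  have Hall : forall d, D d -> d ord0 i < p ord0 i.
    move=> d0 Dd0; rewrite ltNge; apply/negP => h; by apply: nE; exists d0.
  pose s' := \row_j (if j == i then p ord0 i else s ord0 j).
  have : rle s s'.
    apply: Sl => d Dd j; rewrite mxE; case: eqP => [->|_].
      exact: ltW (Hall d Dd).
    exact: Sup d Dd j.
  move/(_ i); rewrite mxE eqxx => h.
  by have := lxs i; have := Hlt i; lra.
have step2 : forall l : seq 'I_n, exists d, D d /\ forall i, i \in l -> p ord0 i <= d ord0 i.
  elim => [|i l [d [Dd Hd]]]; first by have [d Dd] := Dne; exists d.
  have [d1 [Dd1 H1]] := step1 i.
  have [z [Dz [ldz ld1z]]] := Ddir d d1 Dd Dd1.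
  exists z; split => // j; rewrite inE => /orP [/eqP ->|jl].
    exact: le_trans H1 (ld1z i).
  exact: le_trans (Hd j jl) (ldz j).
have [d [Dd Hd]] := step2 (enum 'I_n).
by exists d; split => // i; apply: Hd; rewrite mem_enum.
Qed.

Lemma rn_ne p : exists x, way_below rle p x.
Proof.
exists (p + const_mx 1); apply/rn_wb => i; rewrite !mxE; lra.
Qed.

Lemma rn_filt p x y : way_below rle p x -> way_below rle p y ->
  exists z, way_below rle p z /\ rle z x /\ rle z y.
Proof.
move=> /rn_wb Hx /rn_wb Hy.
exists (\row_i Num.min (x ord0 i) (y ord0 i)); split.
  by apply/rn_wb => i; rewrite mxE lt_min Hx Hy.
by split => i; rewrite mxE ge_min lexx ?orbT.
Qed.

Variable k : comPzRingType.

Lemma part_iii (U : set 'rV[R]_n) : up_set rle U ->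
  lower_bar_iso rle (indicator k U) (indicator k (closure U)).
Proof.
move=> up.
have cl : forall p x : 'rV[R]_n, closure U p -> (forall i, p ord0 i < x ord0 i) -> U x.
  move=> p x Cp Hlt; have [u [Uu Bu]] := Cp _ (rn_box Hlt).
  apply: (up u x Uu) => i; exact: ltW (Bu i).
have H : is_lower_bar rle (M:=indicator k U) (N:=indicator k (closure U))
    (piL k U (closure U)).
  apply: lower_ind.
  - exact: rn_ne.
  - exact: rn_filt.
  - by move=> p x y Hx Hy lxy Tp Sy; exact: cl p x Tp (proj1 (rn_wb p x) Hx).
  - move=> p q x lpq Hx Tp Sx B /rn_nbhs [y [Hy By]].
    exists y; split => //; apply: (cl p y Tp) => i.
    exact: le_lt_trans (lpq i) (Hy i).
  - move=> p Tp; have [x Hx] := rn_ne p.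
    by exists x; split => //; exact: cl p x Tp (proj1 (rn_wb p x) Hx).
  - move=> p nTp x Hx.
    have [B [nB hB]] : exists B, nbhs p B /\ ~ (U `&` B !=set0).
      apply: contrapT => h; apply: nTp => B nB; apply: contrapT => h2.
      by apply: h; exists B.
    have [y [Hy By]] := rn_nbhs nB.
    have [z [Hz [lzx lzy]]] := rn_filt Hx (proj2 (rn_wb p y) Hy).
    exists z; split => //; split => // Uz; apply: hB; exists y; split => //.
    exact: up _ _ Uz lzy.
split; first by exists (indicator k (closure U)), (piL k U (closure U)).
by move=> B pr HB; exact: (@lim_iso _ rle rn_po k _ _ _ _ _ HB H).
Qed.

Lemma part_iv (D : set 'rV[R]_n) : down_set rle D ->
  lower_bar_iso rle (indicator k D) (indicator k (interior D)).
Proof.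
move=> down.
have int : forall q x : 'rV[R]_n, (forall i, q ord0 i < x ord0 i) -> D x -> interior D q.
  move=> q x Hlt Dx; rewrite /interior /=.
  apply: filterS (rn_box Hlt) => y Hy; apply: (down y x Dx) => i; exact: ltW (Hy i).
have H : is_lower_bar rle (M:=indicator k D) (N:=indicator k (interior D))
    (piL k D (interior D)).
  apply: lower_ind.
  - exact: rn_ne.
  - exact: rn_filt.
  - by move=> p x y Hx Hy lxy Tp Sy; apply: down _ _ Sy lxy.
  - by move=> p q x lpq Hx Tp Sx; exact: int q x (proj1 (rn_wb q x) Hx) Sx.
  - move=> p Tp; have [x [Hx Dx]] := rn_nbhs Tp.
    by exists x; split => //; apply/rn_wb.
  - move=> p nTp x Hx; exists x; split => //; split; first by move=> i; exact: lexx.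
    by move=> Dx; apply: nTp; exact: int p x (proj1 (rn_wb p x) Hx) Dx.
split; first by exists (indicator k (interior D)), (piL k D (interior D)).
by move=> B pr HB; exact: (@lim_iso _ rle rn_po k _ _ _ _ _ HB H).
Qed.

End Rn.

Unset Implicit Arguments.

Theorem mainTheorem8 (k : comPzRingType) :
  (forall (P : Type) (le : P -> P -> Prop),
     is_poset le -> continuous_poset le ->
     (forall U : set P, up_set le U ->
        upper_bar_iso le (indicator k U) (indicator k (scott_int le U))) /\
     (forall D : set P, down_set le D ->
        upper_bar_iso le (indicator k D) (indicator k (scott_cl le D)))) /\
  (forall (R : realType) (n : nat),
     (forall U : set 'rV[R]_n, up_set (@rn_le R n) U ->
        lower_bar_iso (@rn_le R n) (indicator k U) (indicator k (closure U))) /\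
     (forall D : set 'rV[R]_n, down_set (@rn_le R n) D ->
        lower_bar_iso (@rn_le R n) (indicator k D) (indicator k (interior D)))).
Proof.
split.
  move=> P le Hpo Hc; split => S HS.
    exact: (@part_i P le Hpo Hc k S HS).
  exact: (@part_ii P le Hpo Hc k S HS).
move=> R n; split => S HS.
  exact: (@part_iii R n k S HS).
exact: (@part_iv R n k S HS).
Qed.
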